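(* Let $G:=\mathrm{Cay}(\Gamma,S)$ be a Cayley graph, $r\ge2$ an integer, and $X$ an $r$-local $2$-separator of $G$. Then no cycle in $G$ of length at most $r$ strongly traverses $X$. In particular, if a word $w$ in $S$ strongly traverses $X$, then $w$ is not a cyclic subword of any morpheme of $\Gamma$ in $S$ of length at most $r$.
   Context: A generating set excludes the identity $\mathbb{I}$ and is closed under inverses; $\mathrm{Cay}(\Gamma,S)$ is the simple graph on $\Gamma$ with edges $\{g,gs\}$. Ball $B_r(v)$: the subgraph of all vertices and edges on closed walks of length $\le r$ through $v$. For a 2-set $X=\{v_0,v_1\}$, $N(X)$ is the set of vertices outside $X$ adjacent to $X$; the connectivity graph $C_r(v_0,v_1)$ has vertex set $N(X)$, with $a,b$ adjacent if for some $i$ they lie in the same component of $B_r(v_i)-v_0-v_1$. $X$ is an $r$-local $2$-separator if $C_r(v_0,v_1)$ is disconnected and $d_G(v_0,v_1)\le r/2$; its $r$-local components are the components of $C_r(v_0,v_1)$. A traversal of $X$ is a walk whose two ends lie in distinct $r$-local components at $X$ and all of whose internal vertices lie in $X$; it is strong if it has exactly two internal vertices. A cycle (as a closed walk) strongly traverses $X$ if some cyclic subwalk of it (a subwalk of a cyclic rotation of it or of its reverse) is a strong traversal of $X$. A word $w=a_1\cdots a_k$ in $S$ strongly traverses $X$ if for some vertex $v$ the walk $v,va_1,va_1a_2,\ldots,va_1\cdots a_k$ has a subwalk that is a strong traversal of $X$. A morpheme of $\Gamma$ in $S$ is a nonempty word in $S$ evaluating to $\mathbb{I}$ none of whose nonempty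 proper contiguous subwords evaluates to $\mathbb{I}$. A word $u$ is a cyclic subword of $w$ if $u$ or $u^{-1}$ is a contiguous subword of a cyclic permutation of $w$. *)

(* Defs.v *)
From mathcomp Require Import all_boot.
Set Implicit Arguments. Unset Strict Implicit. Unset Printing Implicit Defensive.

Record group := Group {
  carrier :> Type;
  gmul : carrier -> carrier -> carrier;
  gone : carrier;
  ginv : carrier -> carrier;
  gmulA : forall x y z, gmul x (gmul y z) = gmul (gmul x y) z;
  gmul1 : forall x, gmul gone x = x;
  gmulV : forall x, gmul (ginv x) x = gone
}.

Section Graphs.
Variable V : Type.

(* membership / contiguous pieces of sequences, without decidable equality *)
Definition onw (v : V) (w : seq V) : Prop := exists p q, w = p ++ v :: q.
Definition infix_w (s w : seq V) : Prop := exists p q, w = p ++ s ++ q.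
Definition consec (w : seq V) (u x : V) : Prop := exists p q, w = p ++ u :: x :: q.

Fixpoint chain (R : V -> V -> Prop) (a : V) (t : seq V) : Prop :=
  match t with [::] => True | y :: t' => R a y /\ chain R y t' end.

Definition connects (P : V -> Prop) (R : V -> V -> Prop) (a b : V) : Prop :=
  exists t, P a /\ (forall u, onw u t -> P u) /\ chain R a t /\ last a t = b.

Variable adj : V -> V -> Prop.

Definition walk (w : seq V) : Prop :=
  match w with [::] => False | x :: t => chain adj x t end.
Definition wlen (w : seq V) : nat := (size w).-1.
Definition closed_walk (w : seq V) : Prop :=
  walk w /\ exists x t, w = x :: t /\ last x t = x.

Definition ball_vtx (r : nat) (v u : V) : Prop :=
  exists w, closed_walk w /\ wlen w <= r /\ onw v w /\ onw u w.
Definition ball_edge (r : nat) (v u x : V) : Prop :=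
  exists w, closed_walk w /\ wlen w <= r /\ onw v w /\ (consec w u x \/ consec w x u).

Definition outX (v0 v1 u : V) : Prop := u <> v0 /\ u <> v1.

Definition same_comp_ball (r : nat) (v v0 v1 a b : V) : Prop :=
  connects (fun u => ball_vtx r v u /\ outX v0 v1 u) (ball_edge r v) a b.

Definition nbhd (v0 v1 a : V) : Prop := outX v0 v1 a /\ (adj v0 a \/ adj v1 a).

Definition Cadj (r : nat) (v0 v1 a b : V) : Prop :=
  nbhd v0 v1 a /\ nbhd v0 v1 b /\
  (same_comp_ball r v0 v0 v1 a b \/ same_comp_ball r v1 v0 v1 a b).

Definition Cconn (r : nat) (v0 v1 a b : V) : Prop :=
  connects (nbhd v0 v1) (Cadj r v0 v1) a b.

Definition dist_le_half (r : nat) (v0 v1 : V) : Prop :=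
  exists x t, walk (x :: t) /\ x = v0 /\ last x t = v1 /\ 2 * wlen (x :: t) <= r.

Definition local_2sep (r : nat) (v0 v1 : V) : Prop :=
  v0 <> v1 /\
  (exists a b, nbhd v0 v1 a /\ nbhd v0 v1 b /\ ~ Cconn r v0 v1 a b) /\
  dist_le_half r v0 v1.

Definition strong_traversal (r : nat) (v0 v1 : V) (s : seq V) : Prop :=
  exists a x y b, s = [:: a; x; y; b] /\ walk s /\
    (x = v0 \/ x = v1) /\ (y = v0 \/ y = v1) /\
    nbhd v0 v1 a /\ nbhd v0 v1 b /\ ~ Cconn r v0 v1 a b.

(* cycles: sequences c_0..c_{n-1} of distinct vertices, n >= 3, with
   c_i ~ c_{i+1} and c_{n-1} ~ c_0; the closed walk is c_0..c_{n-1} c_0 *)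
Definition close_cyc (c : seq V) : seq V :=
  match c with [::] => [::] | x :: t => x :: t ++ [:: x] end.
Definition distinct (c : seq V) : Prop :=
  ~ exists p q t u, c = p ++ u :: q ++ u :: t.
Definition is_cycle (c : seq V) : Prop :=
  3 <= size c /\ distinct c /\ walk (close_cyc c).
Definition cyc_length (c : seq V) : nat := size c.

Definition cyclic_subwalk (s c : seq V) : Prop :=
  exists k, infix_w s (close_cyc (rot k c)) \/ infix_w s (rev (close_cyc (rot k c))).

Definition cycle_strongly_traverses (r : nat) (v0 v1 : V) (c : seq V) : Prop :=
  exists s, strong_traversal r v0 v1 s /\ cyclic_subwalk s c.

End Graphs.

Section Cayley.
Variable G : group.
Variable S : G -> Prop.

Definition word_in (w : seq G) : Prop := forall a, onw a w -> S a.
Definition eval_word (w : seq G) : G := foldr (@gmul G) (@gone G) w.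

Definition generating_set : Prop :=
  ~ S (@gone G) /\ (forall s, S s -> S (@ginv G s)) /\
  (forall g : G, exists w, word_in w /\ eval_word w = g).

Definition cay_adj (g h : G) : Prop := exists s, S s /\ (h = @gmul G g s \/ g = @gmul G h s).

Fixpoint word_walk (v : G) (w : seq G) : seq G :=
  match w with [::] => [:: v] | a :: t => v :: word_walk (@gmul G v a) t end.

Definition word_strongly_traverses (r : nat) (v0 v1 : G) (w : seq G) : Prop :=
  word_in w /\ exists v s, strong_traversal cay_adj r v0 v1 s /\ infix_w s (word_walk v w).

Definition morpheme (w : seq G) : Prop :=
  word_in w /\ w <> [::] /\ eval_word w = @gone G /\
  forall p u q, w = p ++ u ++ q -> u <> [::] -> (p <> [::] \/ q <> [::]) ->
    eval_word u <> @gone G.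

Definition word_inv (w : seq G) : seq G := rev (map (@ginv G) w).

Definition cyclic_subword (u w : seq G) : Prop :=
  exists k, infix_w u (rot k w) \/ infix_w (word_inv u) (rot k w).

End Cayley.

(* Main.v *)
Require Import Defs.
From mathcomp Require Import all_boot zify.
Set Implicit Arguments. Unset Strict Implicit. Unset Printing Implicit Defensive.

Lemma mod_sep n p q : p %% n = q %% n -> p < q -> q < p + n -> False.
Proof.
move=> E lt1 lt2.
have [d Hd] : exists d, q = p + d by exists (q - p); lia.
subst q.
move: E; rewrite -{1}[p]addn0 => /eqP; rewrite eqn_modDl mod0n => /eqP.
rewrite modn_small; lia.
Qed.

Lemma modS_mod n m : (m %% n).+1 %% n = m.+1 %% n.
Proof. by rewrite -[(m %% n).+1]addn1 -[m.+1]addn1 modnDml. Qed.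

Section G.
Variable V : Type.

Lemma onw_nth (x0 : V) w j : j < size w -> onw (nth x0 w j) w.
Proof.
move=> H; exists (take j w), (drop j.+1 w).
by rewrite -(drop_nth x0 H) cat_take_drop.
Qed.

Lemma consec_nth (x0 : V) w j : j.+1 < size w -> consec w (nth x0 w j) (nth x0 w j.+1).
Proof.
move=> H; exists (take j w), (drop j.+2 w).
by rewrite -(drop_nth x0 H) -(drop_nth x0 (ltnW H)) cat_take_drop.
Qed.

Lemma onw_cons (u y : V) t : onw u (y :: t) -> u = y \/ onw u t.
Proof.
case=> [[|z p] [q E]]; first by case: E => ->; left.
by case: E => _ E; right; exists p, q.
Qed.

Lemma onw_nil (u : V) : ~ onw u [::].
Proof. by case=> [[|z p] [q]]. Qed.

Lemma nth_infix (x0 : V) p r q t : t < size r -> nth x0 (p ++ r ++ q) (size p + t) = nth x0 r t.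
Proof. by move=> H; rewrite nth_cat ltnNge leq_addr /= addKn nth_cat H. Qed.

Lemma path_conn (P : V -> Prop) (R : V -> V -> Prop) k : forall h : nat -> V,
  (forall j, j < k -> R (h j) (h j.+1)) -> (forall j, j <= k -> P (h j)) ->
  connects P R (h 0) (h k).
Proof.
elim: k => [|k IH] h HR HP.
  by exists [::]; split; [apply: HP|split=> // u /onw_nil].
have [t [_ [Ht [Hc Hl]]]] := IH (fun j => h j.+1) (fun j Hj => HR j.+1 Hj) (fun j Hj => HP j.+1 Hj).
exists (h 1 :: t); split; first exact: HP.
split; last by split=> //; split=> //; apply: HR.
by move=> u /onw_cons [->|/Ht]; [apply: HP|].
Qed.

Lemma chain_consec (R : V -> V -> Prop) p : forall a u x q, chain R a (p ++ u :: x :: q) -> R u x.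
Proof. elim: p => [|z p IH] a u x q /=; first by case=> _ []. by case=> _ /IH. Qed.

Lemma walk_consec (adj : V -> V -> Prop) w u x : walk adj w -> consec w u x -> adj u x.
Proof.
move=> Hw [[|z p] [q E]]; rewrite E /= in Hw; first by case: Hw.
exact: chain_consec Hw.
Qed.

Section Core.
Variables (adj : V -> V -> Prop) (r : nat) (v0 v1 : V) (f : nat -> V) (n : nat).
Hypotheses (n3 : 3 <= n) (nr : n <= r) (fadj : forall m, adj (f m) (f m.+1))
  (fP : forall m, f m = f (m %% n)) (finj : forall p q, f p = f q -> p %% n = q %% n).

Let W0 := map f (iota 0 n.+1).

Lemma chain_iota k : forall m, chain adj (f m) (map f (iota m.+1 k)).
Proof. elim: k => [|k IH] m; first by []. by split; [exact: fadj | exact: IH]. Qed.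

Lemma last_iota k : forall m, last (f m) (map f (iota m.+1 k)) = f (m + k).
Proof. elim: k => [|k IH] m /=; first by rewrite addn0. by rewrite IH addSnnS. Qed.

Lemma W0_closed : closed_walk adj W0.
Proof.
split; first exact: chain_iota.
exists (f 0), (map f (iota 1 n)); split => //.
by rewrite last_iota add0n fP modnn.
Qed.

Lemma W0_nth j : j <= n -> nth (f 0) W0 j = f j.
Proof. by move=> H; rewrite (nth_map 0) ?size_iota ?nth_iota. Qed.

Lemma mod_lt m : m %% n < n.
Proof. apply: ltn_pmod; lia. Qed.

Lemma W0_onw m : onw (f m) W0.
Proof.
have H := mod_lt m.
rewrite fP.
rewrite -W0_nth.
2: exact: ltnW H.
apply: onw_nth; rewrite /W0 size_map size_iota; exact: ltnW H.
Qed.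

Lemma W0_consec m : consec W0 (f m) (f m.+1).
Proof.
have H := mod_lt m.
have E1 : f m = nth (f 0) W0 (m %% n) by rewrite W0_nth ?(ltnW H) // -fP.
have E2 : f m.+1 = nth (f 0) W0 (m %% n).+1.
  by rewrite W0_nth // (fP m.+1) (fP (m %% n).+1) modS_mod.
rewrite E1 E2.
apply: consec_nth; rewrite /W0 size_map size_iota; exact: H.
Qed.

Lemma W0_len : wlen W0 <= r.
Proof. by rewrite /wlen size_map size_iota. Qed.

Lemma bvtx p m : ball_vtx adj r (f p) (f m).
Proof. exists W0; split; [exact: W0_closed|split; [exact: W0_len|split; exact: W0_onw]]. Qed.

Lemma bedge p m q : q = m.+1 -> ball_edge adj r (f p) (f m) (f q) /\ ball_edge adj r (f p) (f q) (f m).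
Proof.
move=> ->; split; exists W0; (split; [exact: W0_closed|split; [exact: W0_len|split; [exact: W0_onw|]]]);
  [left|right]; exact: W0_consec.
Qed.

Lemma fneq p q : p < q -> q < p + n -> f p <> f q.
Proof. by move=> H1 H2 /finj E; apply: (mod_sep E). Qed.

Lemma core i s : s = [:: f i; f i.+1; f i.+2; f i.+3] \/ s = [:: f i.+3; f i.+2; f i.+1; f i] ->
  ~ strong_traversal adj r v0 v1 s.
Proof.
move=> Hs [a [x [y [b [Es [_ [hx [hy [na [nb ncc]]]]]]]]]].
have n12 : f i.+1 <> f i.+2 by apply: fneq; lia.
have H4 : (a = f i /\ x = f i.+1 /\ y = f i.+2 /\ b = f i.+3) \/
          (a = f i.+3 /\ x = f i.+2 /\ y = f i.+1 /\ b = f i).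
  by case: Hs => Hs; rewrite Hs in Es; case: Es => -> -> -> ->; [left|right].
have Hxy : (x = f i.+1 /\ y = f i.+2) \/ (x = f i.+2 /\ y = f i.+1) by tauto.
have Hv : forall v, (v = v0 \/ v = v1) -> v = f i.+1 \/ v = f i.+2.
  move=> v hv.
  have nxy : x <> y by case: Hxy => [[-> ->]|[-> ->]] // E; apply: n12.
  have : v = x \/ v = y.
    case: hv => ->; case: hx => hx'; case: hy => hy'; rewrite ?hx' ?hy'; try tauto;
    exfalso; apply: nxy; by rewrite hx' hy'.
  by case: Hxy => [[ex ey]|[ex ey]]; rewrite ex ey; tauto.
have out : forall m, i.+3 <= m <= i + n -> outX v0 v1 (f m).
  move=> m hm; have h1 : f m <> f i.+1 by move/esym; apply: fneq; lia.
  have h2 : f m <> f i.+2 by move/esym; apply: fneq; lia.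
  split=> E; [case: (Hv v0 (or_introl erefl))|case: (Hv v1 (or_intror erefl))]; congruence.
have SC : forall z, (z = f i.+1 \/ z = f i.+2) -> same_comp_ball adj r z v0 v1 a b.
  move=> z hz.
  have [pz ->] : exists pz, z = f pz by case: hz => ->; eexists.
  case: H4 => [[-> [_ [_ ->]]]|[-> [_ [_ ->]]]].
  - have e1 : f i = f (i + n - 0) by rewrite subn0 (fP (i + n)) modnDr -fP.
    have e2 : f i.+3 = f (i + n - (n - 3)) by congr f; lia.
    rewrite e1 e2.
    apply: (@path_conn (fun u => ball_vtx adj r (f pz) u /\ outX v0 v1 u) (ball_edge adj r (f pz))
       (n - 3) (fun j => f (i + n - j))).
      move=> j hj; have [_ H] := @bedge pz (i + n - j.+1) (i + n - j) ltac:(lia); exact: H.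
    move=> j hj; split; [exact: bvtx| apply: out; lia].
  - have e1 : f i = f (i.+3 + (n - 3)).
      have -> : i.+3 + (n - 3) = i + n by lia.
      by rewrite (fP (i + n)) modnDr -fP.
    have e2 : f i.+3 = f (i.+3 + 0) by rewrite addn0.
    rewrite e1 e2.
    apply: (@path_conn (fun u => ball_vtx adj r (f pz) u /\ outX v0 v1 u) (ball_edge adj r (f pz))
       (n - 3) (fun j => f (i.+3 + j))).
      move=> j hj; have [H _] := @bedge pz (i.+3 + j) (i.+3 + j.+1) ltac:(lia); exact: H.
    move=> j hj; split; [exact: bvtx| apply: out; lia].
apply: ncc; exists [:: b]; split=> //; split.
  by move=> u /onw_cons [->|/onw_nil].
split=> //; split=> //; split=> //; split=> //.
case: hx => ex; [left|right]; apply: SC; rewrite -ex; case: Hxy => [[-> _]|[-> _]]; tauto.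
Qed.

End Core.
End G.

Section P1.
Variable V : Type.

Lemma distinct_nth (x0 : V) c i j : distinct c -> i < j -> j < size c -> nth x0 c i <> nth x0 c j.
Proof.
move=> D lij lj E; apply: D.
exists (take i c), (take (j - i.+1) (drop i.+1 c)), (drop j.+1 c), (nth x0 c i).
rewrite -{1}(cat_take_drop i c) (drop_nth x0 (ltn_trans lij lj)); congr (_ ++ _ :: _).
rewrite -{1}(cat_take_drop (j - i.+1) (drop i.+1 c)) drop_drop subnK //.
by rewrite (drop_nth x0 lj) E.
Qed.

Lemma nth_rot' (x0 : V) d k j : k <= size d -> j < size d ->
  nth x0 (rot k d) j = nth x0 d ((j + k) %% size d).
Proof.
move=> hk hj; rewrite /rot nth_cat size_drop; case: ifP => h.
  by rewrite nth_drop modn_small; [rewrite addnC | lia].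
rewrite nth_take; last by lia.
have -> : j + k = (j + k - size d) + size d by lia.
by rewrite modnDr modn_small; [congr nth; lia | lia].
Qed.

Lemma close_cyc_cat (x0 : V) d : d <> [::] -> close_cyc d = d ++ [:: nth x0 d 0].
Proof. by case: d. Qed.

Lemma infix4 (x0 : V) (s W : seq V) (g : nat -> V) N : size s = 4 -> size W = N.+1 ->
  (forall j, j <= N -> nth x0 W j = g j) -> infix_w s W ->
  exists i, i + 3 <= N /\ s = [:: g i; g i.+1; g i.+2; g i.+3].
Proof.
move=> s4 sW Hg [p [q E]].
have HN : size W = size p + 4 + size q by rewrite E !size_cat s4 addnA.
exists (size p); split; first lia.
have Ht : forall t, t < 4 -> g (size p + t) = nth x0 s t.
  move=> t ht; rewrite -Hg; last by lia.
  by rewrite E nth_infix // s4.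
case: s s4 E Ht => [|a [|b [|c [|d [|]]]]] // _ E Ht.
rewrite -[size p]addn0 -!addnS !Ht //.
Qed.

Lemma part1 (adj : V -> V -> Prop) r v0 v1 c : is_cycle adj c -> cyc_length c <= r ->
  ~ cycle_strongly_traverses adj r v0 v1 c.
Proof.
case: c => [|c0 ct]; first by case.
set c := c0 :: ct => -[n3 [D wk]] cr [s [ST [k Hk]]].
set n := size c.
have n0 : 0 < n by rewrite /n; lia.
pose f m := nth c0 c (m %% n).
have fP : forall m, f m = f (m %% n) by move=> m; rewrite /f modn_mod.
have finj : forall p q, f p = f q -> p %% n = q %% n.
  move=> p q E; have hp := ltn_pmod p n0; have hq := ltn_pmod q n0.
  case: (ltngtP (p %% n) (q %% n)) => // h; exfalso.
    exact: (distinct_nth D h hq E).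
  exact: (distinct_nth D h hp (esym E)).
have Wn : forall j, j <= n -> nth c0 (close_cyc c) j = f j.
  move=> j hj; rewrite (close_cyc_cat c0) // nth_cat /f.
  case: ltnP => h; first by rewrite modn_small.
  have -> : j = n by lia.
  by rewrite subnn modnn.
have fadj : forall m, adj (f m) (f m.+1).
  move=> m; have hm := ltn_pmod m n0.
  apply: (walk_consec wk).
  have E1 : f m = nth c0 (close_cyc c) (m %% n) by rewrite Wn ?(ltnW hm) // -fP.
  have E2 : f m.+1 = nth c0 (close_cyc c) (m %% n).+1.
    by rewrite Wn // (fP m.+1) (fP (m %% n).+1) modS_mod.
  rewrite E1 E2; apply: consec_nth.
  by rewrite (close_cyc_cat c0) // size_cat addn1 ltnS.
have [k' [hk' Hk']] : exists k', k' < n /\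
   (infix_w s (close_cyc (rot k' c)) \/ infix_w s (rev (close_cyc (rot k' c)))).
  case: (ltnP k n) => hk; first by exists k.
  exists 0; split => //.
  have e : rot k c = rot 0 c by rewrite rot0 rot_oversize.
  by rewrite -e.
have rne : rot k' c <> [::].
  move=> e; have := size_rot k' c; rewrite e /= -/n => e'; lia.
have sW : size (close_cyc (rot k' c)) = n.+1 by rewrite (close_cyc_cat c0) // size_cat size_rot addn1.
have g : forall j, j <= n -> nth c0 (close_cyc (rot k' c)) j = f (j + k').
  move=> j hj; rewrite (close_cyc_cat c0) // nth_cat size_rot -/n.
  have hk2 : k' <= size c by exact: ltnW.
  case: ltnP => h; first by rewrite nth_rot'.
  have -> : j = n by lia.
  rewrite subnn /= nth_rot' //.
  by rewrite /f add0n modnDl.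
have s4 : size s = 4 by case: ST => [a [x [y [b [-> _]]]]].
case: Hk' => Hin.
  have [i [hi Es]] := @infix4 c0 s _ (fun j => f (j + k')) n s4 sW g Hin.
  apply: (core n3 cr fadj fP finj (i := i + k') _ ST); left.
  by rewrite Es /= !addSn.
have sW' : size (rev (close_cyc (rot k' c))) = n.+1 by rewrite size_rev.
have g' : forall j, j <= n -> nth c0 (rev (close_cyc (rot k' c))) j = f (n - j + k').
  by move=> j hj; rewrite nth_rev ?sW // g; [congr f; lia | lia].
have [i [hi Es]] := @infix4 c0 s _ (fun j => f (n - j + k')) n s4 sW' g' Hin.
apply: (core n3 cr fadj fP finj (i := n - i.+3 + k') _ ST); right.
rewrite Es /=.
have e0 : n - i + k' = (n - i.+3 + k').+3 by lia.
have e1 : n - i.+1 + k' = (n - i.+3 + k').+2 by lia.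
have e2 : n - i.+2 + k' = (n - i.+3 + k').+1 by lia.
by rewrite e0 e1 e2.
Qed.
End P1.

Section Cay.
Variable G : group.
Variable S : G -> Prop.
Local Notation "x ** y" := (@gmul G x y) (at level 40, left associativity).
Local Notation one := (@gone G).
Local Notation inv := (@ginv G).

Lemma mulgV' (x : G) : x ** inv x = one.
Proof.
have e1 : x ** inv x = (inv (inv x) ** inv x) ** (x ** inv x) by rewrite gmulV gmul1.
by rewrite e1 -gmulA (gmulA (inv x) x (inv x)) gmulV gmul1 gmulV.
Qed.

Lemma mulg1' (x : G) : x ** one = x.
Proof. by rewrite -(gmulV x) gmulA mulgV' gmul1. Qed.

Lemma cancelL (x y : G) : inv x ** (x ** y) = y.
Proof. by rewrite gmulA gmulV gmul1. Qed.

Lemma eval_cat (p q : seq G) : eval_word (p ++ q) = eval_word p ** eval_word q.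
Proof. elim: p => [|a p IH] /=; first by rewrite gmul1. by rewrite IH gmulA. Qed.

Lemma eval_rcons (p : seq G) a : eval_word (rcons p a) = eval_word p ** a.
Proof. by rewrite -cats1 eval_cat /= mulg1'. Qed.

Lemma ww_size (v : G) w : size (word_walk v w) = (size w).+1.
Proof. by elim: w v => [|a w IH] v //=; rewrite IH. Qed.

Lemma ww_nth (v : G) w t : t <= size w -> nth one (word_walk v w) t = v ** eval_word (take t w).
Proof.
elim: w v t => [|a w IH] v [|t] //= ht; try by rewrite mulg1'.
by rewrite IH // gmulA.
Qed.

Lemma ww_rcons (v : G) w a : word_walk v (rcons w a) = rcons (word_walk v w) ((v ** eval_word w) ** a).
Proof.
elim: w v => [|b w IH] v /=; first by rewrite mulg1'.
by rewrite IH gmulA.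
Qed.

Lemma rev_ww (v : G) w : rev (word_walk v w) = word_walk (v ** eval_word w) (word_inv w).
Proof.
elim/last_ind: w v => [|w a IH] v /=; first by rewrite mulg1'.
rewrite ww_rcons rev_rcons IH /word_inv map_rcons rev_rcons /= eval_rcons.
by rewrite -!gmulA mulgV' mulg1' gmulA.
Qed.

Section Morph.
Variable m : seq G.
Hypothesis Mm : morpheme S m.
Let n := size m.
Let P j := eval_word (take (j %% n) m).

Lemma n0 : 0 < n.
Proof. case: Mm => _ [ne _]; rewrite /n; case: (m) ne => //. Qed.

Lemma PS j : P j.+1 = P j ** nth one m (j %% n).
Proof.
have ha := ltn_pmod j n0.
rewrite /P -modS_mod -eval_rcons -take_nth //.
case: (ltnP (j %% n).+1 n) => h; first by rewrite modn_small.
have -> : (j %% n).+1 = n by lia.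
case: Mm => _ [_ [E _]].
by rewrite modnn take0 take_size E.
Qed.

Lemma Pinj a b : a < b -> b < n -> eval_word (take a m) = eval_word (take b m) -> False.
Proof.
move=> ab bn E.
set mid := drop a (take b m).
have Htb : take b m = take a m ++ mid by rewrite -{1}(cat_take_drop a (take b m)) take_takel // ltnW.
have Em : eval_word mid = one.
  by move: E; rewrite Htb eval_cat => /(congr1 (gmul (inv (eval_word (take a m))))); rewrite cancelL gmulV.
case: Mm => _ [_ [_ H]].
apply: (H (take a m) mid (drop b m)) => //.
- by rewrite catA -Htb cat_take_drop.
- move=> e; have := congr1 size e; rewrite /mid size_drop size_takel /=; [lia | rewrite -/n; lia].
- right=> e; have := congr1 size e; rewrite size_drop /= -/n; lia.
Qed.

Lemma keyA k (v : G) w s : size s = 4 -> infix_w s (word_walk v w) -> infix_w w (rot k m) ->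
  exists u I, s = [:: u ** P I; u ** P I.+1; u ** P I.+2; u ** P I.+3].
Proof.
move=> s4 Hs Hw.
have [k' [hk' Hk']] : exists k', k' <= n /\ infix_w w (rot k' m).
  case: (ltnP k n) => hk; first by exists k; split => //; exact: ltnW.
  exists 0; split => //.
  have e : rot k m = rot 0 m by rewrite rot0 rot_oversize.
  by rewrite -e.
case: Hk' => p [q Er].
have sz : size p + size w <= n by rewrite /n -(size_rot k' m) Er !size_cat; lia.
set J := size p + k'.
have G7 : forall t, t <= size w -> P (J + t) = P J ** eval_word (take t w).
  elim=> [|t IH] ht; first by rewrite addn0 take0 /= mulg1'.
  rewrite addnS PS IH ?(ltnW ht) // (take_nth one ht) eval_rcons -gmulA.
  congr (_ ** (_ ** _)).
  rewrite -(@nth_infix _ one p w q t ht) -Er nth_rot' //; last by rewrite -/n; lia.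
  by congr (nth _ _ (_ %% _)); rewrite /J; lia.
have [i [hi Es]] := @infix4 _ one s _ (fun t => v ** eval_word (take t w)) (size w) s4 (ww_size v w)
   (fun t ht => ww_nth v ht) Hs.
exists (v ** inv (P J)), (J + i).
have Hg : forall t, t <= size w -> v ** eval_word (take t w) = (v ** inv (P J)) ** P (J + t).
  by move=> t ht; rewrite G7 // -gmulA (gmulA (inv _)) gmulV gmul1.
rewrite Es !Hg; try lia.
by rewrite !addnS.
Qed.

Variable u : G.
Let F j := u ** P j.

Lemma Fadj j : cay_adj S (F j) (F j.+1).
Proof.
exists (nth one m (j %% n)); split; last by left; rewrite /F PS gmulA.
case: Mm => Hw _; apply: Hw; apply: onw_nth; exact: ltn_pmod n0.
Qed.

Lemma FP j : F j = F (j %% n).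
Proof. by rewrite /F /P modn_mod. Qed.

Lemma Finj p q : F p = F q -> p %% n = q %% n.
Proof.
move=> /(congr1 (gmul (inv u))); rewrite /F !cancelL /P => E.
have hp := ltn_pmod p n0; have hq := ltn_pmod q n0.
case: (ltngtP (p %% n) (q %% n)) => // h; exfalso.
  exact: (Pinj h hq E).
exact: (Pinj h hp (esym E)).
Qed.

End Morph.
End Cay.
Unset Implicit Arguments. Set Strict Implicit.

Lemma infix_size {T : Type} {s W : seq T} : infix_w s W -> size s <= size W.
Proof. by case=> p [q ->]; rewrite !size_cat; lia. Qed.

Theorem lemma5p10 (G : group) (S : G -> Prop) (r : nat) (v0 v1 : G) :
  generating_set S -> 2 <= r ->
  local_2sep (cay_adj S) r v0 v1 ->
  (forall c : seq G, is_cycle (cay_adj S) c -> cyc_length c <= r ->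
     ~ cycle_strongly_traverses (cay_adj S) r v0 v1 c) /\
  (forall w : seq G, word_strongly_traverses S r v0 v1 w ->
     forall m : seq G, morpheme S m -> size m <= r -> ~ cyclic_subword w m).
Proof.
move=> _ _ _; split.
  by move=> c Hc Hr; apply: part1.
move=> w [_ [v [s [ST Hin]]]] m Mm mr [k Hk].
have s4 : size s = 4 by case: ST => [a [x [y [b [-> _]]]]].
have hw : 3 <= size w.
  by have := infix_size Hin; rewrite ww_size s4.
case: Hk => Hw.
  have n3 : 2 < size m by have := infix_size Hw; rewrite size_rot; lia.
  have [u [I Es]] := keyA Mm s4 Hin Hw.
  apply: (@core _ _ _ _ _ (fun j => gmul u (eval_word (take (j %% size m) m))) (size m)
     n3 mr (Fadj Mm u) (FP m u) (@Finj _ _ m Mm u) I s _ ST).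
  by left.
have n3 : 2 < size m by have := infix_size Hw; rewrite size_rot /word_inv size_rev size_map; lia.
have Hin' : infix_w (rev s) (word_walk (gmul v (eval_word w)) (word_inv w)).
  by rewrite -rev_ww; case: Hin => p [q ->]; exists (rev q), (rev p); rewrite !rev_cat catA.
have [u [I Es]] := keyA Mm (s := rev s) (etrans (size_rev s) s4) Hin' Hw.
apply: (@core _ _ _ _ _ (fun j => gmul u (eval_word (take (j %% size m) m))) (size m)
   n3 mr (Fadj Mm u) (FP m u) (@Finj _ _ m Mm u) I s _ ST).
by right; rewrite -[s]revK Es.
Qed.
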